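(* Let $g\in C^2(\overline U\to\mathbb R)$ and suppose that the discrete transversality inequality $\nabla g(\hat{\bm x}^* )\cdot\bm f^\tau_\pm(\cdot)\ge\hat\alpha_S^2>0$ holds at the arguments $(t,\bm x^\tau(t),\hat t^*,\hat{\bm x}^* )$ for $\bm f^\tau_-$ ($t\in[t_k,\hat t^*]$) and $(\hat t^*,\hat{\bm x}^*,t,\bm x^\tau(t))$ for $\bm f^\tau_+$ ($t\in[\hat t^*,t_{k+1}]$) (as guaranteed for sufficiently small $\tau$ by the discrete transversality lemma). Then for all $t\in[t_k,t_{k+1}]$, $$|t-\hat t^*|\le\frac{\hat M(t-\hat t^* )^2+L_g\|\bm x^\tau(t;\bm x_k,t_k)-\bm x^\tau(\hat t^*;\bm x_k,t_k)\|}{\hat\alpha_S^2},$$ where $L_g$ is the Lipschitz constant of $g$, $\hat M=\frac12\max(\hat M_-,\hat M_+)$, $$\hat M_-=\sup_{t\in[t_k,\hat t^*],\,s\in[0,1]}\big|\bm f^\tau_-(t,\bm x^\tau(t),\hat t^*,\hat{\bm x}^* )\cdot H_g(\bm x^\tau(t)+s(\hat{\bm x}^*-\bm x^\tau(t)))\,\bm f^\tau_-(t,\bm x^\tau(t),\hat t^*,\hat{\bm x}^* )\big|,$$ $$\hat M_+=\sup_{t\in[\hat t^*,t_{k+1}],\,s\in[0,1]}\big|\bm f^\tau_+(\hat t^*,\hat{\bm x}^*,t,\bm x^\tau(t))\cdot H_g(\hat{\bm x}^*+s(\bm x^\tau(t)-\hat{\bm x}^* ))\,\bm f^\tau_+(\hat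 t^*,\hat{\bm x}^*,t,\bm x^\tau(t))\big|,$$ and $H_g$ is the Hessian of $g$.
   Context: Setting: $U\subset\mathbb R^d$ bounded open, switching function $g$, $S=\{g=0\}$, $U_\pm=\{\pm g>0\}$. Discrete vector fields $\bm f^\tau_\pm$. Transition scheme from $\bm x_k\in U_-$ at time $t_k$ with $t_{k+1}=t_k+\tau$: $(\hat t^*,\hat{\bm x}^* )$ with $\hat t^*\in[t_k,t_{k+1}]$ solves $\bm x=\bm x_k+(t-t_k)\bm f^\tau_-(t_k,\bm x_k,t,\bm x)$, $g(\bm x)=0$. Discrete solution $\bm x^\tau(t)=\bm x^\tau(t;\bm x_k,t_k)$: for $t\in[t_k,\hat t^*]$ it satisfies $\hat{\bm x}^*-\bm x^\tau(t)=(\hat t^*-t)\bm f^\tau_-(t,\bm x^\tau(t),\hat t^*,\hat{\bm x}^* )$, and for $t\in[\hat t^*,t_{k+1}]$ it satisfies $\bm x^\tau(t)=\hat{\bm x}^*+(t-\hat t^* )\bm f^\tau_+(\hat t^*,\hat{\bm x}^*,t,\bm x^\tau(t))$; $\bm x^\tau(\hat t^* )=\hat{\bm x}^*$. *)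

(* Defs.v *)
From HB Require Import structures.
From mathcomp Require Import all_boot all_order all_algebra.
From mathcomp Require Import all_classical all_reals all_analysis.
Set Implicit Arguments. Unset Strict Implicit. Unset Printing Implicit Defensive.
Import Order.TTheory GRing.Theory Num.Theory.
Import numFieldNormedType.Exports.
Local Open Scope classical_set_scope.
Local Open Scope ring_scope.

Section Defs.
Variables (R : realType) (d : nat).
Notation V := 'rV[R]_d.

Definition p_partial (i : 'I_d) (h : V -> R) (x : V) : R :=
  'D_(delta_mx 0 i) h x.

Definition p_grad (g : V -> R) (x : V) : V := \row_i p_partial i g x.

Definition p_hessian (g : V -> R) (x : V) : 'M[R]_d :=
  \matrix_(i, j) p_partial j (p_partial i g) x.

Definition p_dot (u v : V) : R := \sum_i u 0 i * v 0 i.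
Definition p_enorm (u : V) : R := Num.sqrt (p_dot u u).

Definition p_qform (H : 'M[R]_d) (u : V) : R := p_dot u (u *m H^T).

Definition p_C2_on (A : set V) (g : V -> R) : Prop :=
  forall x, closure A x ->
    differentiable g x /\
    (forall i, differentiable (p_partial i g) x) /\
    (forall i j, {within closure A, continuous (p_partial j (p_partial i g))}).

Definition p_lipschitz_on (B : set V) (g : V -> R) (L : R) : Prop :=
  forall x y, B x -> B y -> `|g x - g y| <= L * p_enorm (x - y).
End Defs.

(* Main.v *)
From HB Require Import structures.
From mathcomp Require Import all_boot all_order all_algebra.
From mathcomp Require Import all_classical all_reals all_analysis.
From mathcomp Require Import ring lra.
Require Import Defs.
Import Order.TTheory GRing.Theory Num.Theory.
Import numFieldNormedType.Exports.
Local Open Scope classical_set_scope.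
Local Open Scope ring_scope.

Section T.
Variable R : realType.

Lemma cont01 (f df : R -> R) (a b : R) :
  (forall s : R, a <= s <= b -> is_derive s (1:R) f (df s)) ->
  {within `[a, b], continuous f}.
Proof.
move=> H; apply: derivable_within_continuous => s; rewrite in_itv /= => hs.
by have [] := H s hs.
Qed.

Lemma taylor_up (f f1 f2 : R -> R) (M : R) :
  (forall s : R, 0 <= s <= 1 -> is_derive s (1:R) f (f1 s)) ->
  (forall s : R, 0 <= s <= 1 -> is_derive s (1:R) f1 (f2 s)) ->
  (forall s : R, 0 <= s <= 1 -> f2 s <= M) ->
  f 1 - f 0 - f1 0 <= M / 2.
Proof.
move=> d1 d2 bM.
pose p : {poly R} := f1 0 *: 'X + (M / 2) *: 'X^2.
have hp s : p.[s] = f1 0 * s + M / 2 * s ^+ 2.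
  by rewrite /p !hornerE.
have hp' s : p^`().[s] = f1 0 + M * s.
  rewrite /p derivD !derivZ derivX derivXn !hornerE /=.
  by field.
pose h := fun s : R => f s - p.[s].
pose dh := fun s : R => f1 s - p^`().[s].
have dh_ (s : R) : 0 <= s <= 1 -> is_derive s (1:R) h (dh s).
  move=> hs; exact: is_deriveB (d1 s hs) (is_derive_poly p s).
have [c c01 Hc] : exists2 c, c \in `[0, 1] & h 1 - h 0 = dh c * (1 - 0).
  apply: MVT_segment => //.
    by move=> s; rewrite in_itv /= => /andP[a b]; apply: dh_; rewrite !ltW.
  exact: cont01 dh_.
move: c01; rewrite in_itv /= => /andP[c0 c1].
have [c' c'01 Hc'] : exists2 c', c' \in `[0, c] & f1 c - f1 0 = f2 c' * (c - 0).
  apply: MVT_segment => //.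
    move=> s; rewrite in_itv /= => /andP[a b]; apply: d2.
    by rewrite ltW //= ltW // (lt_le_trans b).
  apply: cont01 => s /andP[a b]; apply: d2; rewrite a /=; exact: le_trans b c1.
move: c'01; rewrite in_itv /= => /andP[c'0 c'1].
have : dh c <= 0.
  rewrite /dh hp' subr0 in Hc' *.
  rewrite subr_le0 -lerBlDl Hc' ler_wpM2r //. apply: bM.
  by rewrite c'0 (le_trans c'1).
rewrite /h subr0 mulr1 in Hc.
rewrite -Hc !hp.
rewrite expr1n expr0n /= !mulr1 !mulr0 !addr0 subr0.
lra.
Qed.

Lemma taylor_abs (f f1 f2 : R -> R) (M : R) :
  (forall s : R, 0 <= s <= 1 -> is_derive s (1:R) f (f1 s)) ->
  (forall s : R, 0 <= s <= 1 -> is_derive s (1:R) f1 (f2 s)) ->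
  (forall s : R, 0 <= s <= 1 -> `|f2 s| <= M) ->
  `|f 1 - f 0 - f1 0| <= M / 2.
Proof.
move=> d1 d2 bM; rewrite ler_norml; apply/andP; split; last first.
  apply: taylor_up d1 d2 _ => s hs; exact: le_trans (ler_norm _) (bM s hs).
have := @taylor_up (fun s => - f s) (fun s => - f1 s) (fun s => - f2 s) M.
have H : (forall s : R, 0 <= s <= 1 -> - f2 s <= M).
  by move=> s hs; apply: le_trans (bM s hs); rewrite -normrN; exact: ler_norm.
have e1 : forall s : R, 0 <= s <= 1 -> is_derive s (1:R) (fun s => - f s) (- f1 s).
  move=> s hs; exact: is_deriveN (d1 s hs).
have e2 : forall s : R, 0 <= s <= 1 -> is_derive s (1:R) (fun s => - f1 s) (- f2 s).
  move=> s hs; exact: is_deriveN (d2 s hs).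
move=> /(_ e1 e2 H); lra.
Qed.

Variable d : nat.
Notation V := 'rV[R]_d.

Lemma line_is_derive (h : V -> R) (a v : V) (s : R) :
  differentiable h (a + s *: v) ->
  is_derive s (1:R) (fun r : R => h (a + r *: v)) ('D_v h (a + s *: v)).
Proof.
move=> dh.
have e : (fun t : R => t^-1 *: (((fun r : R => h (a + r *: v)) \o shift s) (t *: 1)
             - (fun r : R => h (a + r *: v)) s))
       = (fun t : R => t^-1 *: ((h \o shift (a + s *: v)) (t *: v) - h (a + s *: v))).
  apply/funext => t /=; congr (_ *: (h _ - _)).
  by rewrite scalerDl [t *: 1]mulr1 addrCA addrA addrC.
apply: DeriveDef; first by rewrite /derivable e; exact: diff_derivable.
by rewrite /derive e.
Qed.

Lemma D_sum (h : V -> R) (x v : V) : differentiable h x ->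
  'D_v h x = \sum_i v 0 i * p_partial i h x.
Proof.
move=> dh; rewrite deriveE // {1}(row_sum_delta v) linear_sum.
apply: eq_bigr => i _; rewrite linearZ /= /p_partial deriveE //.
Qed.

Lemma seg (g : V -> R) (a v : V) (M : R) :
  (forall s : R, 0 <= s <= 1 -> differentiable g (a + s *: v) /\
     forall i, differentiable (p_partial i g) (a + s *: v)) ->
  (forall s : R, 0 <= s <= 1 -> `|p_qform (p_hessian g (a + s *: v)) v| <= M) ->
  `|g (a + v) - g a - p_dot (p_grad g a) v| <= M / 2.
Proof.
move=> C2 bM.
have := @taylor_abs (fun r => g (a + r *: v))
  (fun r => \sum_i v 0 i * p_partial i g (a + r *: v))
  (fun r => p_qform (p_hessian g (a + r *: v)) v) M.
rewrite scale1r scale0r addr0.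
have -> : \sum_i v 0 i * p_partial i g a = p_dot (p_grad g a) v.
  by rewrite /p_dot; apply: eq_bigr => i _; rewrite mxE mulrC.
apply => //.
  move=> s hs; have [dg _] := C2 s hs.
  apply: is_derive_eq; first exact: line_is_derive.
  exact: D_sum.
move=> s hs; have [_ dp] := C2 s hs.
have -> : (fun r => \sum_i v 0 i * p_partial i g (a + r *: v)) =
   \sum_i (fun r => v 0 i * p_partial i g (a + r *: v)).
  by rewrite fct_sumE.
apply: is_derive_eq.
  apply: is_derive_sum => i.
  have Hi := line_is_derive _ _ _ _ (dp i). exact: (is_deriveZ (v 0 i) Hi).
rewrite /p_qform /p_dot; apply: eq_bigr => i _.
rewrite D_sum // mxE /=; congr (_ * _); apply: eq_bigr => j _.
by rewrite !mxE.
Qed.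

Lemma p_dotZr (u w : V) (c : R) : p_dot u (c *: w) = c * p_dot u w.
Proof. rewrite /p_dot mulr_sumr; apply: eq_bigr => i _; rewrite mxE; ring. Qed.

Lemma p_dotNr (u w : V) : p_dot u (- w) = - p_dot u w.
Proof. by rewrite -scaleN1r p_dotZr mulN1r. Qed.

Lemma p_qformZ (H : 'M[R]_d) (u : V) (c : R) :
  p_qform H (c *: u) = c ^+ 2 * p_qform H u.
Proof.
rewrite /p_qform -scalemxAl p_dotZr /p_dot mulr_sumr mulr_sumr.
apply: eq_bigr => i _; rewrite mxE; ring.
Qed.
End T.

Theorem lemma3p5 (R : realType) (d : nat) (U : set 'rV[R]_d)
  (g : 'rV[R]_d -> R)
  (fm fp : R -> 'rV[R]_d -> R -> 'rV[R]_d -> 'rV[R]_d)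
  (tau tk tk1 : R) (xk : 'rV[R]_d) (ts : R) (xs : 'rV[R]_d)
  (xt : R -> 'rV[R]_d) (aS Lg Mm Mp : R) :
  open U -> bounded_set U ->
  p_C2_on U g ->
  p_lipschitz_on (closure U) g Lg ->
  0 < tau -> tk1 = tk + tau ->
  U xk -> g xk < 0 ->
  (* transition point *)
  tk <= ts <= tk1 ->
  xs = xk + (ts - tk) *: fm tk xk ts xs ->
  g xs = 0 ->
  (* discrete solution *)
  xt tk = xk -> xt ts = xs ->
  (forall t, tk <= t <= ts -> xs - xt t = (ts - t) *: fm t (xt t) ts xs) ->
  (forall t, ts <= t <= tk1 -> xt t = xs + (t - ts) *: fp ts xs t (xt t)) ->
  (* the segments on which the Hessian is evaluated lie in closure U *)
  (forall t s, tk <= t <= ts -> 0 <= s <= 1 ->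
     closure U (xt t + s *: (xs - xt t))) ->
  (forall t s, ts <= t <= tk1 -> 0 <= s <= 1 ->
     closure U (xs + s *: (xt t - xs))) ->
  (* discrete transversality *)
  0 < aS ^+ 2 ->
  (forall t, tk <= t <= ts -> aS ^+ 2 <= p_dot (p_grad g xs) (fm t (xt t) ts xs)) ->
  (forall t, ts <= t <= tk1 -> aS ^+ 2 <= p_dot (p_grad g xs) (fp ts xs t (xt t))) ->
  (* Mm, Mp bound the quantities whose suprema define hat M_-, hat M_+ *)
  (forall t s, tk <= t <= ts -> 0 <= s <= 1 ->
     `|p_qform (p_hessian g (xt t + s *: (xs - xt t))) (fm t (xt t) ts xs)| <= Mm) ->
  (forall t s, ts <= t <= tk1 -> 0 <= s <= 1 ->
     `|p_qform (p_hessian g (xs + s *: (xt t - xs))) (fp ts xs t (xt t))| <= Mp) ->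
  forall t, tk <= t <= tk1 ->
    `|t - ts| <= ((2^-1 * Num.max Mm Mp) * (t - ts) ^+ 2
                  + Lg * p_enorm (xt t - xt ts)) / aS ^+ 2.
Proof.
Proof.
move=> oU bU C2 Lip tau0 etk1 Uxk gxk tsb exs gxs xtk xts dm dp clm clp a0 trm trp bm bp t tb.
rewrite xts.
have C2pt : forall x, closure U x -> differentiable g x /\
    forall i, differentiable (p_partial i g) x.
  by move=> x cx; have [h1 [h2 _]] := C2 x cx.
set Mx := Num.max Mm Mp.
have Mm_le : Mm <= Mx by rewrite le_max lexx.
have Mp_le : Mp <= Mx by rewrite le_max lexx orbT.
move/andP: tsb => [tkts tstk1]; move/andP: tb => [tkt ttk1].
rewrite ler_pdivlMr //.
have [tts|tts] := leP t ts.
-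
  have tb' : tk <= t <= ts by rewrite tkt tts.
  have cxt : closure U (xt t) by have := clm t 0 tb'; rewrite lexx ler01 scale0r addr0; apply.
  have cxs : closure U xs.
    by have := clm t 1 tb'; rewrite lexx ler01 scale1r addrC subrK; apply.
  have hv : xt t - xs = - ((ts - t) *: fm t (xt t) ts xs) by rewrite -(dm t tb') opprB.
  have pt (s : R) : xs + s *: (xt t - xs) = xt t + (1 - s) *: (xs - xt t).
    by apply/rowP => i; rewrite !mxE; ring.
  have s01 (s : R) : 0 <= s <= 1 -> 0 <= 1 - s <= 1.
    by move=> /andP[h1 h2]; apply/andP; split; lra.
  have hv' : xt t - xs = (- (ts - t)) *: fm t (xt t) ts xs by rewrite hv scaleNr.
  have hb : forall s : R, 0 <= s <= 1 ->
      `|p_qform (p_hessian g (xs + s *: (xt t - xs))) (xt t - xs)| <= (ts - t) ^+ 2 * Mm.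
    move=> s hs; rewrite {2}hv' p_qformZ sqrrN normrM ger0_norm ?sqr_ge0 //.
    rewrite pt; apply: ler_wpM2l; first exact: sqr_ge0.
    exact: (bm t (1 - s) tb' (s01 s hs)).
  have H := @seg R d g xs (xt t - xs) ((ts - t) ^+ 2 * Mm)
    (fun s hs => C2pt _ (eq_ind _ _ (clm t (1 - s) tb' (s01 s hs)) _ (esym (pt s))))
    hb.
  rewrite [xs + _]addrC subrK gxs subr0 hv' p_dotZr in H.
  have Lg1 := Lip _ _ cxt cxs; rewrite gxs subr0 in Lg1.
  have T0 : 0 <= ts - t by lra.
  have h1 := trm t tb'.
  have h2 : (ts - t) * aS ^+ 2 <= (ts - t) * p_dot (p_grad g xs) (fm t (xt t) ts xs).
    exact: ler_wpM2l.
  have h3 : (ts - t) ^+ 2 * Mm <= (ts - t) ^+ 2 * Mx.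
    by apply: ler_wpM2l => //; exact: sqr_ge0.
  have e1 : `|t - ts| = ts - t by rewrite distrC ger0_norm.
  have e2 : (t - ts) ^+ 2 = (ts - t) ^+ 2 by rewrite -sqrrN opprB.
  rewrite e1 e2.
  move: H; rewrite ler_norml => /andP[H1 H2].
  move: Lg1; rewrite ler_norml => /andP[L1 L2].
  lra.
-
  have tb' : ts <= t <= tk1 by rewrite ttk1 ltW.
  have cxs : closure U xs by have := clp t 0 tb'; rewrite lexx ler01 scale0r addr0; apply.
  have cxt : closure U (xt t).
    by have := clp t 1 tb'; rewrite lexx ler01 scale1r addrC subrK; apply.
  have hv : xt t - xs = (t - ts) *: fp ts xs t (xt t).
    by rewrite {1}(dp t tb') addrC addKr.
  have hb : forall s : R, 0 <= s <= 1 ->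
      `|p_qform (p_hessian g (xs + s *: (xt t - xs))) (xt t - xs)| <= (t - ts) ^+ 2 * Mp.
    move=> s hs; rewrite {2}hv p_qformZ normrM ger0_norm ?sqr_ge0 //.
    apply: ler_wpM2l; first exact: sqr_ge0.
    exact: (bp t s tb' hs).
  have H := @seg R d g xs (xt t - xs) ((t - ts) ^+ 2 * Mp)
    (fun s hs => C2pt _ (clp t s tb' hs)) hb.
  rewrite [xs + _]addrC subrK gxs subr0 hv p_dotZr in H.
  have Lg1 := Lip _ _ cxt cxs; rewrite gxs subr0 in Lg1.
  have T0 : 0 <= t - ts by lra.
  have h1 := trp t tb'.
  have h2 : (t - ts) * aS ^+ 2 <= (t - ts) * p_dot (p_grad g xs) (fp ts xs t (xt t)).
    exact: ler_wpM2l.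
  have h3 : (t - ts) ^+ 2 * Mp <= (t - ts) ^+ 2 * Mx.
    by apply: ler_wpM2l => //; exact: sqr_ge0.
  have e1 : `|t - ts| = t - ts by rewrite ger0_norm.
  rewrite e1.
  move: H; rewrite ler_norml => /andP[H1 H2].
  move: Lg1; rewrite ler_norml => /andP[L1 L2].
  lra.
Qed.
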